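(* There exists a convex decision set $\mathcal{X}\subset\mathbb{R}^d$ such that, for each communication network $G$ and for arbitrary (and possibly different) online learning algorithms run by the agents, there is a sequence $(S_1,\ell_1),\dots,(S_T,\ell_T)$, where $\ell_t$ are convex losses on $\mathcal{X}$ and $S_t=\{v_t\}$ with $v_t$ drawn i.i.d. from some fixed distribution on $V$, such that $\mathbb{E}[R_T]=\Omega(\sqrt{\alpha_G T})$, where the expectation is taken with respect to the random draw of $v_1,\dots,v_T$ and the constant hidden in $\Omega$ does not depend on $G$, $T$ or the algorithms.
   Context: Setting (cooperative online convex optimization): $G=(V,E)$ is an undirected graph with $V=\{1,\dots,N\}$; $\mathcal{N}_v=\{v\}\cup\{w:(v,w)\in E\}$; $\alpha_G$ is the independence number (largest size of a set of pairwise non-adjacent vertices). Initially, hidden from the agents, the environment fixes active sets $S_1,S_2,\dots\subseteq V$ and differentiable convex losses $\ell_1,\ell_2,\dots$ on $\mathcal{X}$. At each time $t$: each $v\in S_t$ predicts $\boldsymbol{x}_t(v)\in\mathcal{X}$; every agent in $\bigcup_{u\in S_t}\mathcal{N}_u$ receives $\ell_t$ as feedback; the system incurs loss $\frac{1}{|S_t|}\sum_{v\in S_t}\ell_t(\boldsymbol{x}_t(v))$. Network regret: $R_T=\sum_{t=1}^T\frac{1}{|S_t|}\sum_{v\in S_t}\ell_t(\boldsymbol{x}_t(v))-\inf_{\boldsymbol{x}\in\mathcal{X}}\sum_{t=1}^T\ell_t(\boldsymbol{x})$. Here the agents' algorithms are unrestricted: they may know the graph and may treat feedback from different sources differently (no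 oblivious-interface restriction); each agent's prediction may depend only on the feedback it has received. *)

(* Defs.v *)
From HB Require Import structures.
From mathcomp Require Import all_boot all_order all_algebra.
From mathcomp Require Import all_classical all_reals all_analysis.
Set Implicit Arguments. Unset Strict Implicit. Unset Printing Implicit Defensive.
Import Order.TTheory GRing.Theory Num.Theory.
Import numFieldNormedType.Exports.
Local Open Scope ring_scope.
Local Open Scope classical_set_scope.

Section CoopOCO.
Variable R : realType.

Definition simple_graph (N : nat) (E : rel 'I_N) : Prop :=
  irreflexive E /\ symmetric E.

Definition nbhd (N : nat) (E : rel 'I_N) (v : 'I_N) : {set 'I_N} :=
  [set w | (w == v) || E v w].

Definition independent (N : nat) (E : rel 'I_N) (A : {set 'I_N}) : bool :=
  [forall u in A, forall w in A, ~~ E u w].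

Definition independence_number (N : nat) (E : rel 'I_N) : nat :=
  (\max_(A : {set 'I_N} | independent E A) #|A|)%N.

Definition enorm (d : nat) (x : 'rV[R]_d) : R :=
  Num.sqrt (\sum_(i < d) x ord0 i ^+ 2).

Definition convex_on (d : nat) (X : set 'rV[R]_d) (f : 'rV[R]_d -> R) : Prop :=
  forall x y, X x -> X y -> forall t : R, 0 <= t <= 1 ->
    f (t *: x + (1 - t) *: y) <= t * f x + (1 - t) * f y.

Definition lipschitz1_on (d : nat) (X : set 'rV[R]_d) (f : 'rV[R]_d -> R) : Prop :=
  forall x y, X x -> X y -> `|f x - f y| <= enorm (x - y).

Definition admissible_loss (d : nat) (X : set 'rV[R]_d) (f : 'rV[R]_d -> R) : Prop :=
  convex_on X f /\ (forall x, X x -> differentiable f x) /\ lipschitz1_on X f.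

Definition loss (d : nat) := 'rV[R]_d -> R.

(* What agent v observes at round s: the set of active agents in its closed
   neighbourhood (the "sources" of feedback) and, if that set is nonempty,
   the loss l_s. *)
Definition obs (N d : nat) := ({set 'I_N} * option (loss d))%type.

(* A (deterministic) algorithm for each agent: given the round t and the
   feedback history of rounds 0..t-1, output a prediction. Different agents
   may run different algorithms; the algorithms may depend on the graph. *)
Definition strategy (N d : nat) := 'I_N -> nat -> seq (obs N d) -> 'rV[R]_d.

Definition observation (N d : nat) (E : rel 'I_N) (S : nat -> {set 'I_N})
    (l : nat -> loss d) (v : 'I_N) (s : nat) : obs N d :=
  let A := S s :&: nbhd E v in
  (A, if A == finset.set0 then None else Some (l s)).

Definition history (N d : nat) (E : rel 'I_N) (S : nat -> {set 'I_N})
    (l : nat -> loss d) (v : 'I_N) (t : nat) : seq (obs N d) :=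
  [seq observation E S l v s | s <- iota 0 t].

Definition prediction (N d : nat) (alg : strategy N d) (E : rel 'I_N)
    (S : nat -> {set 'I_N}) (l : nat -> loss d) (v : 'I_N) (t : nat) : 'rV[R]_d :=
  alg v t (history E S l v t).

Definition network_regret (N d : nat) (E : rel 'I_N) (X : set 'rV[R]_d)
    (alg : strategy N d) (S : nat -> {set 'I_N}) (l : nat -> loss d) (T : nat) : R :=
  \sum_(t < T) ((#|S t|%:R)^-1 * \sum_(v in S t) l t (prediction alg E S l v t))
  - inf [set (\sum_(t < T) l t x) | x in X].

Definition is_distribution (N : nat) (p : 'I_N -> R) : Prop :=
  (forall v, 0 <= p v) /\ \sum_(v < N) p v = 1.

Definition singleton_sets (N T : nat) (vs : {ffun 'I_T -> 'I_N}) : nat -> {set 'I_N} :=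
  fun t => if (insub t : option 'I_T) is Some i then finset.set1 (vs i) else finset.set0.

Definition iid_expectation (N T : nat) (p : 'I_N -> R)
    (F : {ffun 'I_T -> 'I_N} -> R) : R :=
  \sum_(vs : {ffun 'I_T -> 'I_N}) (\prod_(t < T) p (vs t)) * F vs.

End CoopOCO.

(* Main.v *)
Require Import Defs.
From HB Require Import structures.
From mathcomp Require Import all_boot all_order all_algebra.
From mathcomp Require Import all_classical all_reals all_analysis.
From mathcomp Require Import ring lra.
Import Order.TTheory GRing.Theory Num.Theory.
Local Open Scope ring_scope.

Set Implicit Arguments. Unset Strict Implicit.

Section Avg.
Variable R : realType.
Variable I : finType.

Definition flip (i : I) (g : {ffun I -> bool}) : {ffun I -> bool} :=
  [ffun j => if j == i then ~~ g j else g j].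

Lemma flipK i : involutive (flip i).
Proof.
move=> g; apply/ffunP => j; rewrite !ffunE.
by case: eqP => // _; rewrite negbK.
Qed.

Lemma sum_flip (F : {ffun I -> bool} -> R) (h : bool -> R) i :
  (forall g, F (flip i g) = F g) ->
  \sum_g F g * h (g i) = (h true + h false) / 2 * \sum_g F g.
Proof.
move=> Fi.
have e : \sum_g F g * h (g i) = \sum_g F g * h (~~ g i).
  rewrite (reindex_inj (inv_inj (flipK i))) /=.
  by apply: eq_bigr => g _; rewrite Fi ffunE eqxx.
have e2 : \sum_g F g * h (g i) + \sum_g F g * h (~~ g i)
         = (h true + h false) * \sum_g F g.
  rewrite -big_split /= mulr_sumr; apply: eq_bigr => g _.
  by case: (g i) => /=; ring.
rewrite -e in e2.
move: e2; set S := \sum_(g : {ffun I -> bool}) _ * h (g i); set Z := \sum_g F g; move=> e2.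
have -> : S = (S + S) / 2 by field.
by rewrite e2; field.
Qed.

Lemma sum_prod_avg (Q : seq I) (F : {ffun I -> bool} -> R) (h : I -> bool -> R) :
  uniq Q ->
  (forall g g' : {ffun I -> bool}, (forall j, j \notin Q -> g j = g' j) -> F g = F g') ->
  \sum_g F g * \prod_(j <- Q) h j (g j)
  = (\prod_(j <- Q) ((h j true + h j false) / 2)) * \sum_g F g.
Proof.
elim: Q F => [|i Q IH] F /=.
  by move=> _ _; rewrite big_nil mul1r; apply: eq_bigr => g _; rewrite big_nil mulr1.
move=> /andP[iQ uQ] FQ.
have -> : \sum_g F g * \prod_(j <- i :: Q) h j (g j)
   = \sum_g (F g * \prod_(j <- Q) h j (g j)) * h i (g i).
  by apply: eq_bigr => g _; rewrite big_cons; ring.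
rewrite sum_flip; last first.
  move=> g; congr (_ * _).
    apply: FQ => j; rewrite inE negb_or => /andP[ji _].
    by rewrite ffunE (negbTE ji).
  rewrite big_seq_cond [RHS]big_seq_cond; apply: eq_bigr => j /andP[jQ _].
  rewrite ffunE; case: eqP => // ji; by move: iQ; rewrite -ji jQ.
rewrite IH //; last first.
  by move=> g g' e; apply: FQ => j; rewrite inE negb_or => /andP[_ /e].
by rewrite big_cons mulrA.
Qed.

End Avg.


Section Key.
Variable R : realType.
Variable I : finType.

Definition sg (b : bool) : R := if b then 1 else -1.
Definition Phi (e : R) (g : {ffun I -> bool}) := \prod_j (1 + e * sg (g j)).
Definition Mp (e : R) (P : {set I}) (g : {ffun I -> bool}) :=
  \prod_(j in P) (1 + e * sg (g j)).

Lemma sg2 b : sg b * sg b = 1.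
Proof. by case: b; rewrite /sg /=; ring. Qed.

Lemma key (e : R) (P : {set I}) (t : I) (x : {ffun I -> bool} -> R) :
  t \notin P ->
  (forall g g' : {ffun I -> bool}, (forall j, j \in P -> g j = g' j) -> x g = x g') ->
  \sum_g Phi e g * sg (g t) * x g = e * \sum_g x g * Mp e P g.
Proof.
move=> tP xP.
pose h := fun j b => (1 + e * sg b) * (if j == t then sg b else 1).
have E1 : forall g : {ffun I -> bool}, Phi e g * sg (g t) * x g =
    (x g * Mp e P g) * \prod_(j <- enum (~: P)) h j (g j).
  move=> g; rewrite big_enum /= /h big_split /=.
  rewrite /Phi /Mp (bigID (mem P)) /=.
  have -> : \prod_(i in ~: P) (if i == t then sg (g i) else 1) = sg (g t).
    rewrite (bigD1 t) /=; last by rewrite inE.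
    rewrite eqxx big1 ?mulr1 // => j /andP[_ /negbTE ->] //.
  have -> : \prod_(i in ~: P) (1 + e * sg (g i)) = \prod_(i | i \notin P) (1 + e * sg (g i)).
    by apply: eq_bigl => j; rewrite inE.
  ring.
rewrite (eq_bigr _ (fun g _ => E1 g)) sum_prod_avg ?enum_uniq //; last first.
  move=> g g' eg; rewrite (xP g g'); last first.
    by move=> j jP; apply: eg; rewrite mem_enum inE jP.
  congr (_ * _); apply: eq_bigr => j jP; by rewrite eg // mem_enum inE jP.
congr (_ * _); rewrite big_enum /= (bigD1 t) /=; last by rewrite inE.
rewrite /h eqxx big1 /=.
  by rewrite /sg; field.
by move=> j /andP[_ /negbTE ->]; rewrite /sg; field.
Qed.

Lemma sum_Mp2 (e : R) (P : {set I}) :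
  \sum_g Mp e P g ^+ 2 = (1 + e ^+ 2) ^+ #|P| * \sum_(g : {ffun I -> bool}) 1.
Proof.
pose h := fun (j : I) b => (1 + e * sg b) ^+ 2.
have E1 : forall g : {ffun I -> bool}, Mp e P g ^+ 2 =
    1 * \prod_(j <- enum P) h j (g j).
  by move=> g; rewrite mul1r big_enum /= /Mp prodrXl.
rewrite (eq_bigr _ (fun g _ => E1 g)) sum_prod_avg ?enum_uniq //.
congr (_ * _); rewrite big_enum /= -prodr_const; apply: eq_bigr => j _.
by rewrite /h /sg; field.
Qed.

Lemma Mp_pm (e : R) (P : {set I}) g : Mp e P g * Mp (- e) P g = (1 - e ^+ 2) ^+ #|P|.
Proof.
rewrite /Mp -big_split -prodr_const; apply: eq_bigr => j _ /=.
have := sg2 (g j); move: (sg (g j)) => s hs.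
by rewrite expr2; nra.
Qed.

Lemma Mp_ge0 (e : R) P g : `|e| <= 1 -> 0 <= Mp e P g.
Proof.
move=> he; apply: prodr_ge0 => j _; rewrite /sg.
by case: (g j); rewrite ?mulr1 ?mulrN1; move: he; rewrite ler_norml => /andP[]; lra.
Qed.

Lemma sum_Mp (e : R) (P : {set I}) :
  \sum_g Mp e P g = \sum_(g : {ffun I -> bool}) 1.
Proof.
pose h := fun (j : I) b => (1 + e * sg b).
have E1 : forall g : {ffun I -> bool}, Mp e P g =
    1 * \prod_(j <- enum P) h j (g j).
  by move=> g; rewrite mul1r big_enum.
rewrite (eq_bigr _ (fun g _ => E1 g)) sum_prod_avg ?enum_uniq //.
by rewrite big1 ?mul1r // => j _; rewrite /h /sg; field.
Qed.

End Key.


Section LB.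
Variable R : realType.
Variable I : finType.

Lemma bernoulli (u : R) n : 0 <= u <= 1 -> 1 - n%:R * u <= (1 - u) ^+ n.
Proof.
move=> /andP[u0 u1]; elim: n => [|n IH]; first by rewrite expr0 mul0r subr0.
rewrite exprS -natr1.
have h0 : 0 <= (1 - u) ^+ n by apply: exprn_ge0; lra.
have h1 : 0 <= n%:R * u by apply: mulr_ge0.
nra.
Qed.

Lemma learner_bound (eps : R) (P : {set I}) (x : {ffun I -> bool} -> R) :
  0 <= eps <= 1 -> (forall g, `|x g| <= 1) ->
  `|\sum_g x g * (Mp eps P g - Mp (- eps) P g)|
     <= (8 * (#|P|%:R * eps ^+ 2) + 1/4) * \sum_(g : {ffun I -> bool}) 1.
Proof.
move=> /andP[e0 e1] xb.
set Z := \sum_(g : {ffun I -> bool}) (1 : R).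
set y := #|P|%:R * eps ^+ 2.
have y0 : 0 <= y by apply: mulr_ge0 => //; apply: sqr_ge0.
have Z0 : 0 <= Z by apply: sumr_ge0.
have step1 : `|\sum_g x g * (Mp eps P g - Mp (- eps) P g)|
     <= \sum_g `|Mp eps P g - Mp (- eps) P g|.
  apply: le_trans (ler_norm_sum _ _ _) _; apply: ler_sum => g _.
  rewrite normrM; apply: ler_piMl => //.
apply: le_trans step1 _.
have [ys|yl] := lerP y (1/2).
- have step2 : \sum_g `|Mp eps P g - Mp (- eps) P g|
      <= \sum_g ((Mp eps P g - Mp (- eps) P g) ^+ 2 + 1/4).
    apply: ler_sum => g _; set D := Mp _ _ _ - _.
    have := sqr_ge0 (`|D| - 1/2); rewrite -[D ^+ 2]real_normK ?num_real //.
    move=> h; rewrite expr2 in h *; nra.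
  apply: le_trans step2 _.
  have e3 : \sum_g ((Mp eps P g - Mp (- eps) P g) ^+ 2 + 1/4)
    = (2 * (1 + eps ^+ 2) ^+ #|P| - 2 * (1 - eps ^+ 2) ^+ #|P| + 1/4) * Z.
    have -> : \sum_g ((Mp eps P g - Mp (- eps) P g) ^+ 2 + 1/4)
      = \sum_g Mp eps P g ^+ 2 + \sum_g Mp (- eps) P g ^+ 2
        - 2 * \sum_g (Mp eps P g * Mp (- eps) P g) + 1/4 * Z.
      rewrite /Z mulr_sumr mulr_sumr -!sumrN -!big_split /=.
      by apply: eq_bigr => g _; ring.
    rewrite !sum_Mp2 sqrrN.
    have -> : \sum_g (Mp eps P g * Mp (- eps) P g) = (1 - eps ^+ 2) ^+ #|P| * Z.
      by rewrite /Z mulr_sumr; apply: eq_bigr => g _; rewrite Mp_pm mulr1.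
    rewrite -/Z; ring.
  rewrite e3; apply: ler_wpM2r => //.
  set a := (1 + eps ^+ 2) ^+ #|P|; set b := (1 - eps ^+ 2) ^+ #|P|.
  have e2 : 0 <= eps ^+ 2 <= 1 by rewrite sqr_ge0 /= expr2; nra.
  have hb : 1 - y <= b by apply: bernoulli.
  have hab : a * b <= 1.
    rewrite /a /b -exprMn; apply: exprn_ile1.
      by rewrite expr2 in e2 *; nra.
    by rewrite expr2 in e2 *; nra.
  have b1 : b <= 1 by apply: exprn_ile1; lra.
  have a0 : 0 <= a by apply: exprn_ge0; rewrite expr2 in e2 *; nra.
  nra.
- have step2 : \sum_g `|Mp eps P g - Mp (- eps) P g|
      <= \sum_g (Mp eps P g + Mp (- eps) P g).
    apply: ler_sum => g _.
    have h1 := Mp_ge0 P g (_ : `|eps| <= 1).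
    have h2 := Mp_ge0 P g (_ : `|- eps| <= 1).
    rewrite normrN in h2.
    have en : `|eps| <= 1 by rewrite ger0_norm.
    have := h1 en; have := h2 en; move=> a b.
    by rewrite ler_norml; apply/andP; split; lra.
  apply: le_trans step2 _.
  rewrite big_split /= !sum_Mp -/Z.
  have -> : Z + Z = 2 * Z by ring.
  apply: ler_wpM2r => //; lra.
Qed.

End LB.


Section IID.
Variable R : realType.
Variables N T : nat.
Variable p : 'I_N -> R.
Hypothesis sum_p : \sum_v p v = 1.

Lemma iid_prod (c : 'I_T -> 'I_N -> R) :
  \sum_(vs : {ffun 'I_T -> 'I_N}) \prod_t (p (vs t) * c t (vs t))
  = \prod_t \sum_v (p v * c t v).
Proof. by rewrite bigA_distr_bigA. Qed.

Lemma iid_one : iid_expectation p (fun _ : {ffun 'I_T -> 'I_N} => 1) = 1.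
Proof.
rewrite /iid_expectation.
transitivity (\prod_(t : 'I_T) \sum_v (p v * 1)).
  rewrite -iid_prod; apply: eq_bigr => vs _; rewrite mulr1.
  by apply: eq_bigr => t _; rewrite mulr1.
by rewrite big1 // => t _; under eq_bigr do rewrite mulr1; exact: sum_p.
Qed.

Lemma iid_lin (F G : {ffun 'I_T -> 'I_N} -> R) a :
  iid_expectation p (fun vs => F vs + a * G vs)
  = iid_expectation p F + a * iid_expectation p G.
Proof.
rewrite /iid_expectation mulr_sumr -big_split /=; apply: eq_bigr => vs _; ring.
Qed.

Lemma iid_sum (I : finType) (F : I -> {ffun 'I_T -> 'I_N} -> R) :
  iid_expectation p (fun vs => \sum_i F i vs) = \sum_i iid_expectation p (F i).
Proof.
rewrite /iid_expectation exchange_big /=; apply: eq_bigr => vs _.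
by rewrite mulr_sumr.
Qed.

Lemma iid_pair (s t : 'I_T) (f : 'I_N -> 'I_N -> R) : s != t ->
  iid_expectation p (fun vs => f (vs s) (vs t))
  = \sum_a \sum_b p a * p b * f a b.
Proof.
move=> st.
pose c a b := fun (i : 'I_T) (v : 'I_N) =>
  if i == s then (v == a)%:R else if i == t then (v == b)%:R else (1 : R).
have Pc : forall a b (vs : {ffun 'I_T -> 'I_N}),
    \prod_i c a b i (vs i) = (vs s == a)%:R * (vs t == b)%:R.
  move=> a b vs; rewrite (bigD1 s) // (bigD1 t) /=; last by rewrite eq_sym st.
  rewrite /c !eqxx [t == s]eq_sym (negbTE st) big1 ?mulr1 //.
  by move=> i /andP[/negbTE -> /negbTE ->].
have E1 : forall vs : {ffun 'I_T -> 'I_N}, f (vs s) (vs t)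
   = \sum_a \sum_b f a b * \prod_i c a b i (vs i).
  move=> vs.
  have sd : forall (G : 'I_N -> R) u, \sum_a (u == a)%:R * G a = G u.
    move=> G u; rewrite (bigD1 u) //= eqxx mul1r big1 ?addr0 //.
    by move=> a an; rewrite eq_sym (negbTE an) mul0r.
  transitivity (\sum_a (vs s == a)%:R * \sum_b (vs t == b)%:R * f a b).
    by rewrite sd sd.
  apply: eq_bigr => a _; rewrite mulr_sumr; apply: eq_bigr => b _.
  rewrite Pc; ring.
rewrite /iid_expectation.
under eq_bigr do rewrite E1 mulr_sumr.
rewrite exchange_big /=; apply: eq_bigr => a _.
under eq_bigr do rewrite mulr_sumr.
rewrite exchange_big /=; apply: eq_bigr => b _.
have E2 : forall vs : {ffun 'I_T -> 'I_N},
   \prod_t0 p (vs t0) * (f a b * \prod_i c a b i (vs i))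
   = f a b * \prod_i (p (vs i) * c a b i (vs i)).
  by move=> vs; rewrite big_split /=; ring.
under eq_bigr do rewrite E2.
rewrite -mulr_sumr iid_prod.
have sd' : forall (G : 'I_N -> R) u, \sum_v G v * (v == u)%:R = G u.
  move=> G u; rewrite (bigD1 u) //= eqxx mulr1 big1 ?addr0 //.
  by move=> v vn; rewrite (negbTE vn) mulr0.
have -> : \prod_i \sum_v (p v * c a b i v) = p a * p b.
  rewrite (bigD1 s) //= (bigD1 t) /=; last by rewrite eq_sym st.
  rewrite [X in _ * (_ * X)]big1 ?mulr1; last first.
    move=> i /andP[i1 i2]; rewrite /c (negbTE i1) (negbTE i2).
    by under eq_bigr do rewrite mulr1.
  by rewrite /c eqxx [t == s]eq_sym (negbTE st) eqxx !sd'.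
ring.
Qed.

End IID.


Section Main.
Local Open Scope classical_set_scope.
Variable R : realType.
Definition Xs : set 'rV[R]_1 := [set x | -1 <= x ord0 ord0 <= 1].
Definition lin (a : R) : loss R 1 := fun x => a * x ord0 ord0.

Variables (N T : nat) (E : rel 'I_N).
Variable alg : strategy R N 1.
Hypothesis algX : forall v t h, Xs (alg v t h).

Definition lossg (g : {ffun 'I_T -> bool}) : nat -> loss R 1 :=
  fun s => if (insub s : option 'I_T) is Some i then lin (sg R (g i)) else lin 0.

Definition xpred (vs : {ffun 'I_T -> 'I_N}) (g : {ffun 'I_T -> bool}) (t : 'I_T) : R :=
  (prediction alg E (singleton_sets vs) (lossg g) (vs t) t) ord0 ord0.

Definition Pset (vs : {ffun 'I_T -> 'I_N}) (t : 'I_T) : {set 'I_T} :=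
  [set s : 'I_T | (s < t)%N && (vs s \in nbhd E (vs t))].

Lemma lossg_val g (t : 'I_T) : lossg g t = lin (sg R (g t)).
Proof. by rewrite /lossg valK. Qed.

Lemma singleton_val (vs : {ffun 'I_T -> 'I_N}) (t : 'I_T) :
  singleton_sets vs t = [set vs t]%SET.
Proof. by rewrite /singleton_sets valK. Qed.

Lemma regret_lb vs (g : {ffun 'I_T -> bool}) :
  \sum_(t < T) sg R (g t) * xpred vs g t + `|\sum_(t < T) sg R (g t)|
  <= network_regret E Xs alg (singleton_sets vs) (lossg g) T.
Proof.
rewrite /network_regret lerD //.
  rewrite le_eqVlt; apply/orP; left; apply/eqP/eq_bigr => t _.
  by rewrite singleton_val cards1 invr1 mul1r big_set1 lossg_val /lin /xpred.
set S := \sum_(t < T) sg R (g t).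
have Hs : forall x : 'rV[R]_1, \sum_(t < T) lossg g t x = S * x ord0 ord0.
  by move=> x; rewrite /S mulr_suml; apply: eq_bigr => t _; rewrite lossg_val.
rewrite lerNr.
have lb : has_lbound [set \sum_(t < T) lossg g t x | x in Xs].
  exists (- `|S|) => _ [x Xx <-]; rewrite Hs.
  move: Xx; rewrite /Xs /= => /andP[x1 x2].
  have : `|S * x ord0 ord0| <= `|S|.
    by rewrite normrM ler_piMr // ler_norml x1 x2.
  by rewrite ler_norml => /andP[].
pose x0 : 'rV[R]_1 := const_mx (if 0 <= S then -1 else 1).
apply: le_trans (ge_inf lb _) _.
  by exists x0 => //; rewrite /Xs /= mxE; case: ifP => _; lra.
rewrite /x0 mxE; case: ifP => S0.
  by rewrite ger0_norm // mulrN1.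
by rewrite ltr0_norm ?mulr1 ?opprK // ltNge S0.
Qed.

Lemma xpred_inv vs (t : 'I_T) (g g' : {ffun 'I_T -> bool}) :
  (forall j, j \in Pset vs t -> g j = g' j) -> xpred vs g t = xpred vs g' t.
Proof.
move=> eg; rewrite /xpred /prediction; congr (alg _ _ _ _ _).
rewrite /history; apply/eq_in_map => s; rewrite mem_iota add0n => /andP[_ st].
have sT : (s < T)%N by apply: ltn_trans st (ltn_ord t).
rewrite /observation /singleton_sets /lossg (insubT (fun x => x < T)%N sT) /=.
case: ifP => // A0; congr (_, Some _).
rewrite eg // inE st /=.
apply: contraFT A0 => h; apply/eqP/setP => w; rewrite !inE.
move: h; rewrite inE => h; case: eqP => // ->; exact: negbTE h.
Qed.

Lemma xpred_bd vs g (t : 'I_T) : `|xpred vs g t| <= 1.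
Proof.
by rewrite /xpred /prediction; have /andP[a b] := algX (vs t) t
  (history E (singleton_sets vs) (lossg g) (vs t) t); rewrite ler_norml a b.
Qed.

End Main.


Section PerVs.
Variable R : realType.
Variables (N T : nat) (E : rel 'I_N).
Variable alg : strategy R N 1.
Hypothesis algX : forall v t h, Xs (alg v t h).
Variable eps : R.
Hypothesis eps01 : 0 <= eps <= 1.

Let FF := {ffun 'I_T -> bool}.
Definition Z : R := \sum_(g : {ffun 'I_T -> bool}) 1.
Definition omega (g : {ffun 'I_T -> bool}) : R := (Phi eps g + Phi (- eps) g) / (2 * Z).

Lemma Z_gt0 : 0 < Z.
Proof.
rewrite /Z sumr_const card_ffun card_bool ltr0n.
by rewrite expn_gt0.
Qed.

Lemma Phi_Mp (e : R) (g : FF) : Phi e g = Mp e [set: 'I_T]%SET g.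
Proof. by rewrite /Phi /Mp; apply: eq_bigl => j; rewrite inE. Qed.

Lemma Phi_ge0 (e : R) (g : FF) : `|e| <= 1 -> 0 <= Phi e g.
Proof. by move=> h; rewrite Phi_Mp; apply: Mp_ge0. Qed.

Lemma sum_Phi (e : R) : \sum_(g : FF) Phi e g = Z.
Proof. by under eq_bigr do rewrite Phi_Mp; rewrite sum_Mp. Qed.

Lemma eps_n1 : `|eps| <= 1.
Proof. by case/andP: eps01 => a b; rewrite ger0_norm. Qed.
Lemma eps_n2 : `|- eps| <= 1.
Proof. by rewrite normrN eps_n1. Qed.

Lemma omega_ge0 g : 0 <= omega g.
Proof.
rewrite /omega; apply: divr_ge0; last by have := Z_gt0; lra.
by apply: addr_ge0; apply: Phi_ge0; [exact: eps_n1 | exact: eps_n2].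
Qed.

Lemma sum_omega : \sum_g omega g = 1.
Proof.
rewrite /omega -mulr_suml big_split /= !sum_Phi.
have := Z_gt0 => Z0; field; lra.
Qed.

Lemma learner_vs vs (t : 'I_T) :
  - (eps / 2) * (8 * (#|Pset E vs t|%:R * eps ^+ 2) + 1/4)
  <= \sum_g omega g * (sg R (g t) * xpred E alg vs g t).
Proof.
set P := Pset E vs t.
set x := fun g => xpred E alg vs g t.
have tP : t \notin P by rewrite inE ltnn.
have xinv : forall g g' : FF, (forall j, j \in P -> g j = g' j) -> x g = x g'.
  by move=> g g' h; apply: xpred_inv.
have -> : \sum_g omega g * (sg R (g t) * xpred E alg vs g t)
  = (\sum_g Phi eps g * sg R (g t) * x g + \sum_g Phi (- eps) g * sg R (g t) * x g)
     / (2 * Z).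
  rewrite -big_split /= mulr_suml; apply: eq_bigr => g _; rewrite /omega /x; ring.
rewrite !(key _ tP xinv).
have -> : (eps * \sum_g x g * Mp eps P g + - eps * \sum_g x g * Mp (- eps) P g)
   = eps * \sum_g x g * (Mp eps P g - Mp (- eps) P g).
  rewrite mulNr -mulrBr; congr (_ * _); rewrite -sumrB; apply: eq_bigr => g _; ring.
have xb : forall g, `|x g| <= 1 by move=> g; apply: (xpred_bd E algX).
have := learner_bound P eps01 xb; rewrite -/Z.
set S := \sum_g _; set B := 8 * _ + _ => hS.
have Z0 := Z_gt0.
move: hS; rewrite ler_norml => /andP[h1 _].
case/andP: eps01 => e0 e1.
have -> : eps * S / (2 * Z) = (eps / 2) * (S / Z) by field; lra.
have : - B <= S / Z.
  by rewrite ler_pdivlMr // mulNr.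
move=> h2; nra.
Qed.

Lemma Mp_set0 (e : R) (g : FF) : Mp e (finset.set0 : {set 'I_T}) g = 1.
Proof. by rewrite /Mp big_set0. Qed.

Lemma comparator_vs :
  eps * T%:R <= \sum_g omega g * `|\sum_(t < T) sg R (g t)|.
Proof.
have Z0 := Z_gt0.
have h : forall g : FF, (Phi eps g - Phi (- eps) g) / (2 * Z) * \sum_(t < T) sg R (g t)
   <= omega g * `|\sum_(t < T) sg R (g t)|.
  move=> g; rewrite /omega.
  have a0 := Phi_ge0 g eps_n1; have b0 := Phi_ge0 g eps_n2.
  set S := \sum_(t < T) _.
  have s1 : S <= `|S| by apply: ler_norm.
  have s2 : - S <= `|S| by rewrite -normrN ler_norm.
  have -> : (Phi eps g - Phi (- eps) g) / (2 * Z) * S = (Phi eps g * S - Phi (- eps) g * S) / (2 * Z) by ring.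
  have -> : (Phi eps g + Phi (- eps) g) / (2 * Z) * `|S| = (Phi eps g * `|S| + Phi (- eps) g * `|S|) / (2 * Z) by ring.
  apply: ler_wpM2r; first by rewrite invr_ge0; lra.
  nra.
apply: le_trans (ler_sum _ (fun g _ => h g)).
have e1 : forall e : R, \sum_(g : FF) Phi e g * \sum_(t < T) sg R (g t) = T%:R * (e * Z).
  move=> e.
  under eq_bigr do rewrite mulr_sumr.
  rewrite exchange_big /=.
  rewrite (eq_bigr (fun _ => e * Z)); first by rewrite sumr_const card_ord mulr_natl.
  move=> j _.
  have tP : j \notin (finset.set0 : {set 'I_T}) by rewrite inE.
  have xinv : forall g g' : FF, (forall i, i \in (finset.set0 : {set 'I_T}) -> g i = g' i) -> (fun _ => (1:R)) g = (fun _ => 1) g' by [].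
  have K := key e tP xinv.
  have -> : \sum_(i : FF) Phi e i * sg R (i j) = \sum_(i : FF) Phi e i * sg R (i j) * (fun _ => (1:R)) i.
    by apply: eq_bigr => g _; rewrite mulr1.
  rewrite K; congr (_ * _); rewrite /Z; apply: eq_bigr => g _; rewrite Mp_set0; ring.
have -> : \sum_(g : FF) (Phi eps g - Phi (- eps) g) / (2 * Z) * \sum_(t < T) sg R (g t)
   = (\sum_(g : FF) Phi eps g * \sum_(t < T) sg R (g t) - \sum_(g : FF) Phi (- eps) g * \sum_(t < T) sg R (g t)) / (2 * Z).
  rewrite -sumrB mulr_suml; apply: eq_bigr => g _; ring.
rewrite !e1.
rewrite le_eqVlt; apply/orP; left; apply/eqP; field; lra.
Qed.
End PerVs.


Section Fin.
Variable R : realType.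
Variables (N T : nat) (E : rel 'I_N).
Variable alg : strategy R N 1.
Hypothesis algX : forall v t h, Xs (alg v t h).

Lemma per_vs (eps : R) (eps01 : 0 <= eps <= 1) (vs : {ffun 'I_T -> 'I_N}) :
  eps * T%:R - (eps / 2) * \sum_(t < T) (8 * (#|Pset E vs t|%:R * eps ^+ 2) + 1/4)
  <= \sum_(g : {ffun 'I_T -> bool}) omega eps g * network_regret E (@Xs R) alg (singleton_sets vs) (lossg g) T.
Proof.
apply: le_trans (_ : \sum_g omega eps g *
   (\sum_(t < T) sg R (g t) * xpred E alg vs g t + `|\sum_(t < T) sg R (g t)|) <= _);
  last first.
  apply: ler_sum => g _; apply: ler_wpM2l; first exact: omega_ge0.
  exact: regret_lb.
have -> : \sum_g omega eps g *
   (\sum_(t < T) sg R (g t) * xpred E alg vs g t + `|\sum_(t < T) sg R (g t)|)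
  = \sum_(t < T) \sum_g omega eps g * (sg R (g t) * xpred E alg vs g t)
    + \sum_g omega eps g * `|\sum_(t < T) sg R (g t)|.
  rewrite exchange_big -big_split /=; apply: eq_bigr => g _.
  by rewrite mulrDr mulr_sumr.
rewrite addrC lerD //; last exact: comparator_vs.
rewrite mulr_sumr -sumrN; apply: ler_sum => t _.
by rewrite -mulNr; apply: learner_vs.
Qed.

End Fin.

Section Unif.
Variable R : realType.
Variables (N T : nat) (E : rel 'I_N).
Variable A : {set 'I_N}.
Hypothesis indA : independent E A.
Hypothesis Apos : (0 < #|A|)%N.

Definition punif (v : 'I_N) : R := if v \in A then (#|A|%:R)^-1 else 0.

Lemma punif_ge0 v : 0 <= punif v.
Proof. by rewrite /punif; case: ifP => // _; rewrite invr_ge0 ler0n. Qed.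

Lemma punif_sum : \sum_v punif v = 1.
Proof.
rewrite /punif -big_mkcond /= sumr_const -[_ *+ #|A|]mulr_natr mulVf // pnatr_eq0 -lt0n. exact: Apos.
Qed.

Lemma pair_bound :
  \sum_a \sum_b punif a * punif b * (a \in nbhd E b)%:R = (#|A|%:R)^-1.
Proof.
rewrite exchange_big /=.
have h : forall b, \sum_a punif a * punif b * (a \in nbhd E b)%:R = punif b * punif b.
  move=> b; rewrite (bigD1 b) //= big1 ?addr0.
    by rewrite inE eqxx /= mulr1.
  move=> a ab; rewrite /punif inE (negbTE ab) /=.
  case: ifP => aA; last by rewrite !mul0r.
  case: ifP => bA; last by rewrite mulr0 mul0r.
  move/forall_inP: indA => /(_ b bA) /forall_inP /(_ a aA) /negbTE ->.
  by rewrite mulr0.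
under eq_bigr do rewrite h.
have -> : \sum_b punif b * punif b = \sum_b punif b * (#|A|%:R)^-1.
  by apply: eq_bigr => b _; rewrite /punif; case: ifP => _; rewrite ?mul0r.
by rewrite -mulr_suml punif_sum mul1r.
Qed.

Lemma En (t : 'I_T) :
  iid_expectation punif (fun vs => #|Pset E vs t|%:R) <= T%:R / #|A|%:R.
Proof.
have e : forall vs : {ffun 'I_T -> 'I_N}, #|Pset E vs t|%:R
   = \sum_(s < T) (((s < t)%N && (vs s \in nbhd E (vs t)))%:R : R).
  move=> vs; rewrite -sum1_card natr_sum big_mkcond /=; apply: eq_bigr => s _.
  by rewrite inE; case: ifP.
have -> : iid_expectation punif (fun vs : {ffun 'I_T -> 'I_N} => #|Pset E vs t|%:R)
   = iid_expectation punif (fun vs : {ffun 'I_T -> 'I_N} => \sum_(s < T) (((s < t)%N && (vs s \in nbhd E (vs t)))%:R : R)).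
  by apply: eq_bigr => vs _; rewrite e.
rewrite iid_sum.
apply: le_trans (_ : \sum_(s < T) (#|A|%:R)^-1 <= _); last first.
  by rewrite sumr_const card_ord mulr_natl.
apply: ler_sum => s _.
case st: (s < t)%N.
  have snt : s != t by rewrite neq_ltn st.
  have -> : iid_expectation punif (fun vs : {ffun 'I_T -> 'I_N} => ((true && (vs s \in nbhd E (vs t)))%:R : R))
     = iid_expectation punif (fun vs : {ffun 'I_T -> 'I_N} => (fun a b => ((a \in nbhd E b)%:R : R)) (vs s) (vs t)).
    by [].
  by rewrite (iid_pair punif_sum (fun a b => ((a \in nbhd E b)%:R : R)) snt) pair_bound.
rewrite /iid_expectation big1 ?invr_ge0 ?ler0n // => vs _; by rewrite mulr0.
Qed.

End Unif.


Section Fin2.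
Local Open Scope classical_set_scope.
Variable R : realType.

Lemma Xs_convex : convex_set (@Xs R).
Proof.
move=> x y l; rewrite !inE /Xs /= => /andP[x1 x2] /andP[y1 y2].
rewrite !mxE.
have l0 : 0 <= l%:num by [].
have l1 : l%:num <= 1 by [].
set L := l%:num in l0 l1 *.
rewrite /unstable.onem.
apply/andP; split; nra.
Qed.

Lemma Xs_norm (x : 'rV[R]_1) : Xs x -> enorm x <= 1.
Proof.
rewrite /Xs /enorm /= => /andP[x1 x2].
by rewrite big_ord1 sqrtr_sqr ler_norml x1 x2.
Qed.

Lemma lin_adm (a : R) : `|a| <= 1 -> admissible_loss (@Xs R) (lin a).
Proof.
move=> ha; split; [|split].
- move=> x y _ _ t _; rewrite /lin !mxE.
  rewrite le_eqVlt; apply/orP; left; apply/eqP; ring.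
- move=> x _; rewrite /lin.
  have -> : (fun x : 'rV[R]_1 => a * x ord0 ord0) = a *: (fun x : 'rV[R]_1 => x ord0 ord0).
    by apply/funext => z.
  exact/differentiableZ/differentiable_coord.
- move=> x y _ _; rewrite /lin /enorm big_ord1 sqrtr_sqr !mxE -mulrBr normrM.
  by rewrite ler_piMl.
Qed.

Lemma lossg_adm T (g : {ffun 'I_T -> bool}) t : admissible_loss (@Xs R) (lossg g t).
Proof.
rewrite /lossg; case: insub => [i|]; apply: lin_adm; last by rewrite normr0.
by rewrite /sg; case: (g i); rewrite ?normrN normr1.
Qed.

Variables (N T : nat) (p : 'I_N -> R).
Hypothesis p0 : forall v, 0 <= p v.

Lemma iid_mono (F G : {ffun 'I_T -> 'I_N} -> R) :
  (forall vs, F vs <= G vs) -> iid_expectation p F <= iid_expectation p G.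
Proof.
move=> h; apply: ler_sum => vs _; apply: ler_wpM2l => //.
by apply: prodr_ge0 => i _.
Qed.

Lemma iid_scale (F : {ffun 'I_T -> 'I_N} -> R) a :
  iid_expectation p (fun vs => a * F vs) = a * iid_expectation p F.
Proof. by rewrite /iid_expectation mulr_sumr; apply: eq_bigr => vs _; ring. Qed.

End Fin2.


Lemma alg1 (R : realType) (e T S : R) :
  e * T - e / 2 * (8 * e ^+ 2 * S + T / 4) = 7 / 8 * (e * T) * 1 + - (4 * e ^+ 3) * S.
Proof. by field. Qed.

Lemma numeric (R : realType) (eps a T S : R) : 0 < a -> 0 < T -> 0 <= eps ->
  eps ^+ 2 = a / T / 16 -> S <= T * (T / a) ->
  5 / 8 * (eps * T) <= 7 / 8 * (eps * T) * 1 + - (4 * eps ^+ 3) * S.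
Proof.
move=> a0 T0 e0 e2 hS.
have h : 4 * eps ^+ 3 * (T * (T / a)) = eps * T / 4.
  rewrite exprS e2; field; apply/andP; split; lra.
have e3 : 0 <= eps ^+ 3 by apply: exprn_ge0.
nra.
Qed.


Unset Implicit Arguments.
Local Open Scope classical_set_scope.

Theorem theorem4 (R : realType) :
  exists (d : nat) (X : set 'rV[R]_d),
    [/\ convex_set X, X !=set0 & forall x, X x -> enorm x <= 1] /\
    exists c : R, 0 < c /\
      forall (N : nat) (E : rel 'I_N), (0 < N)%N -> simple_graph E ->
      forall T : nat, (independence_number E <= T)%N ->
      forall alg : strategy R N d, (forall v t h, X (alg v t h)) ->
      exists (p : 'I_N -> R) (l : nat -> loss R d),
        [/\ is_distribution p,
            (forall t, admissible_loss X (l t)) &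
            c * Num.sqrt ((independence_number E)%:R * T%:R)
              <= iid_expectation p
                   (fun vs : {ffun 'I_T -> 'I_N} => network_regret E X alg (singleton_sets vs) l T)].
Proof.
exists 1%N, (@Xs R); split.
  split; [exact: Xs_convex| |exact: Xs_norm].
  by exists (const_mx 0); rewrite /Xs /= mxE; apply/andP; split; lra.
exists (1/8); split; first lra.
move=> N E N0 [irrE symE] T aT alg algX.
have hne : (0 < #|[pred A : {set 'I_N} | independent E A]|)%N.
  apply/card_gt0P; exists finset.set0; rewrite inE /independent.
  by apply/forall_inP => u; rewrite inE.
have [A indA eqA] := eq_bigmax_cond (fun A : {set 'I_N} => #|A|) hne.
rewrite inE in indA.
have eqa : independence_number E = #|A| by rewrite /independence_number -eqA.
rewrite eqa in aT *.
have Apos : (0 < #|A|)%N.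
  rewrite -eqa /independence_number.
  pose v0 : 'I_N := Ordinal N0.
  apply: (@leq_trans #|[set v0]%SET|); first by rewrite cards1.
  apply: (@leq_bigmax_cond _ (independent E) (fun A : {set 'I_N} => #|A|)).
  apply/forall_inP => u; rewrite inE => /eqP ->; apply/forall_inP => w.
  by rewrite inE => /eqP ->; rewrite irrE.
set a := #|A| in aT Apos *.
have Tpos : (0 < T)%N by apply: leq_trans aT.
have aR : (0 < a%:R :> R) by rewrite ltr0n.
have TR : (0 < T%:R :> R) by rewrite ltr0n.
have aTR : (a%:R <= T%:R :> R) by rewrite ler_nat.
pose eps : R := Num.sqrt (a%:R / T%:R) / 4.
have r0 : 0 <= a%:R / T%:R :> R by apply: divr_ge0; lra.
have r1 : a%:R / T%:R <= 1 :> R by rewrite ler_pdivrMr // mul1r.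
have s0 := sqrtr_ge0 (a%:R / T%:R : R).
have s1 : Num.sqrt (a%:R / T%:R) <= 1 :> R.
  by rewrite -[X in _ <= X]sqrtr1 ler_sqrt // ler01.
have eps01 : 0 <= eps <= 1 by rewrite /eps; apply/andP; split; lra.
have eps2 : eps ^+ 2 = a%:R / T%:R / 16.
  by rewrite /eps expr_div_n sqr_sqrtr // -natrX.
have sq : Num.sqrt (a%:R * T%:R) = Num.sqrt (a%:R / T%:R) * T%:R :> R.
  have -> : a%:R * T%:R = a%:R / T%:R * T%:R ^+ 2 :> R by rewrite expr2 mulrA (divfK (lt0r_neq0 TR)).
  by rewrite sqrtrM // sqrtr_sqr ger0_norm //; lra.
pose p : 'I_N -> R := punif R A.
pose IE := fun g : {ffun 'I_T -> bool} => iid_expectation p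
  (fun vs : {ffun 'I_T -> 'I_N} => network_regret E (@Xs R) alg (singleton_sets vs) (lossg g) T).
have main : 5 / 8 * (eps * T%:R) <= \sum_(g : {ffun 'I_T -> bool}) omega eps g * IE g.
  have pge0 : forall v, 0 <= p v by move=> v; apply: punif_ge0.
  have -> : \sum_(g : {ffun 'I_T -> bool}) omega eps g * IE g = iid_expectation p (fun vs : {ffun 'I_T -> 'I_N} =>
     \sum_(g : {ffun 'I_T -> bool}) omega eps g * network_regret E (@Xs R) alg (singleton_sets vs) (lossg g) T).
    by rewrite iid_sum; apply: eq_bigr => g _; rewrite iid_scale.
  apply: le_trans (iid_mono pge0 (per_vs E algX eps01)).
  have -> : (fun vs : {ffun 'I_T -> 'I_N} => eps * T%:R - eps / 2 * \sum_(t < T) (8 * (#|Pset E vs t|%:R * eps ^+ 2) + 1 / 4))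
     = (fun vs => (fun _ => 7 / 8 * (eps * T%:R) * 1) vs + - (4 * eps ^+ 3) * \sum_(t < T) #|Pset E vs t|%:R).
    apply: funext => vs /=.
    have -> : \sum_(t < T) (8 * (#|Pset E vs t|%:R * eps ^+ 2) + 1 / 4)
       = 8 * eps ^+ 2 * \sum_(t < T) #|Pset E vs t|%:R + T%:R / 4 :> R.
      rewrite big_split /= sumr_const card_ord mulr_sumr; congr (_ + _).
        by apply: eq_bigr => t _; ring.
      by rewrite -mulr_natl; ring.
    exact: alg1.
  rewrite iid_lin iid_scale iid_one ?punif_sum // iid_sum.
  apply: (@numeric R eps a%:R T%:R) => //; first by case/andP: eps01.
  apply: (@le_trans _ _ (\sum_(t < T) (T%:R / a%:R))).
    by apply: ler_sum => t _; apply: En.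
  by rewrite sumr_const card_ord [X in _ <= X]mulr_natl.
have pge0 : forall v, 0 <= p v by move=> v; apply: punif_ge0.
have epos : 0 < eps.
  rewrite /eps divr_gt0 // sqrtr_gt0 divr_gt0 //.
have [g Hg] : exists g, eps * T%:R / 2 <= IE g.
  case: (pselect (exists x, eps * T%:R / 2 <= IE x)) => // nH; exfalso.
  have hlt : forall x, IE x <= eps * T%:R / 2.
    move=> x; apply/ltW; rewrite ltNge; apply/negP => h; apply: nH; by exists x.
  have : \sum_(g : {ffun 'I_T -> bool}) omega eps g * IE g <= eps * T%:R / 2.
    apply: (@le_trans _ _ (\sum_(g : {ffun 'I_T -> bool}) omega eps g * (eps * T%:R / 2))).
      apply: ler_sum => g _; apply: ler_wpM2l; [exact: omega_ge0 | exact: hlt].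
    by rewrite -mulr_suml sum_omega mul1r.
  have : 0 < eps * T%:R by apply: mulr_gt0.
  move: main; lra.
exists p, (lossg g); split.
- by split; [exact: pge0 | exact: punif_sum].
- by move=> t; apply: lossg_adm.
- rewrite sq; apply: le_trans Hg.
  by rewrite /eps le_eqVlt; apply/orP; left; apply/eqP; field.
Qed.
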